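(* Let $J$ be a Jordan algebra with unit element $1$ over a field $F$ of characteristic $\neq 2,3$, and let $d$ be a derivation with invertible values of $J$. Then every proper ideal $I$ of $J$ satisfies $d(I) = 0$.
   Context: A Jordan algebra is a commutative algebra satisfying $(x^2,y,x)=0$, where $(a,b,c)=(ab)c-a(bc)$. In a Jordan algebra $J$ with unit $1$, an element $x$ is invertible if there exists $y \in J$ with $xy = 1$ and $x^2 y = x$. A derivation with invertible values of $J$ is a nonzero derivation $d$ of $J$ such that for every $x \in J$, $d(x)$ is either invertible or equal to $0$. *)

(* Defs.v *)
(* A (nonassociative) algebra over a field F is represented by
   a vector space V : lmodType F together with a multiplication mul : V -> V -> V
   which is required to be bilinear. *)
From HB Require Import structures.
From mathcomp Require Import all_boot all_order all_algebra.
Set Implicit Arguments. Unset Strict Implicit. Unset Printing Implicit Defensive.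
Import GRing.Theory.
Local Open Scope ring_scope.

Section JordanDefs.
Variables (F : fieldType) (V : lmodType F) (mul : V -> V -> V).

Definition assoc (a b c : V) : V := mul (mul a b) c - mul a (mul b c).

(* mul is F-bilinear (linearity in the second argument follows from
   commutativity, but we state both for clarity). *)
Definition bilinear_mul : Prop :=
  (forall (a : F) (x y z : V), mul (a *: x + y) z = a *: mul x z + mul y z) /\
  (forall (a : F) (x y z : V), mul z (a *: x + y) = a *: mul z x + mul z y).

Definition jordan_algebra_with_unit (one : V) : Prop :=
  [/\ bilinear_mul,
      (forall x y : V, mul x y = mul y x),
      (forall x y : V, assoc (mul x x) y x = 0) &
      (forall x : V, mul one x = x)].

Definition jinvertible (one x : V) : Prop :=
  exists y : V, mul x y = one /\ mul (mul x x) y = x.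

Definition derivation (d : V -> V) : Prop :=
  (forall (a : F) (x y : V), d (a *: x + y) = a *: d x + d y) /\
  (forall x y : V, d (mul x y) = mul (d x) y + mul x (d y)).

Definition derivation_inv_values (one : V) (d : V -> V) : Prop :=
  [/\ derivation d,
      (exists x : V, d x != 0) &
      (forall x : V, jinvertible one (d x) \/ d x = 0)].

(* (two-sided, since mul is commutative) jideal: a subspace closed under
   multiplication by arbitrary elements of the algebra *)
Definition jideal (I : V -> Prop) : Prop :=
  [/\ I 0,
      (forall (a : F) (x y : V), I x -> I y -> I (a *: x + y)) &
      (forall x y : V, I x -> I (mul y x))].

Definition jproper_ideal (I : V -> Prop) : Prop :=
  jideal I /\ exists x : V, ~ I x.

End JordanDefs.
Arguments jordan_algebra_with_unit {F V} mul one.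
Arguments derivation_inv_values {F V} mul one d.
Arguments jproper_ideal {F V} mul I.
Arguments jinvertible {F V} mul one x.
Arguments derivation {F V} mul d.
Arguments jideal {F V} mul I.
Arguments assoc {F V} mul a b c.
Arguments bilinear_mul {F V} mul.

(* Main.v *)
Require Import Defs.
From HB Require Import structures.
From mathcomp Require Import all_boot all_order all_algebra.
Import GRing.Theory.
Local Open Scope ring_scope.

Theorem lemma2 (F : fieldType) (V : lmodType F) (mul : V -> V -> V) (one : V)
  (d : V -> V) (I : V -> Prop) :
  2%N \notin [pchar F] -> 3%N \notin [pchar F] ->
  jordan_algebra_with_unit mul one ->
  derivation_inv_values mul one d ->
  jproper_ideal mul I ->
  forall x : V, I x -> d x = 0.
Proof.
move=> H2 _ [_ Hc _ H1] [[Hdl Hdm] _ Hinv] [[I0 Ilin Imul] [z Nz]] x Ix.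
have Iadd : forall a b, I a -> I b -> I (a + b).
  by move=> a b Ia Ib; have := Ilin 1 a b Ia Ib; rewrite scale1r.
have Iopp : forall a, I a -> I (- a).
  by move=> a Ia; have := Ilin (-1) a 0 Ia I0; rewrite addr0 scaleN1r.
have noinv : forall u, I u -> jinvertible mul one u -> False.
  move=> u Iu [v [Huv _]]; apply: Nz.
  have Ione : I one by rewrite -Huv Hc; apply: Imul.
  by rewrite -(H1 z) Hc; apply: Imul.
have d0 : d 0 = 0.
  have := Hdl 1 0 0; rewrite !scale1r !addr0 => h.
  by apply: (addrI (d 0)); rewrite addr0 -h.
have two : (2%:R : F) != 0.
  apply/negP => h; move/negP: H2; apply; by rewrite inE /= h.
set u := d x.
have Hw : mul x u = 0.
  have Ixx : I (d (mul x x)).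
    by rewrite Hdm; apply: Iadd; [|rewrite Hc]; exact: Imul.
  have : d (mul x x) = 0 by case: (Hinv (mul x x)) => // /(noinv _ Ixx).
  rewrite Hdm -/u Hc -mulr2n -scaler_nat => /eqP.
  by rewrite scaler_eq0 (negbTE two) /= => /eqP.
case: (Hinv x) => // -[v [Huv Hu2]]; exfalso.
have Iu2 : I (mul u u).
  have := Hdm x u; rewrite Hw d0 => /eqP; rewrite eq_sym addr_eq0 => /eqP ->.
  by apply: Iopp; rewrite Hc; apply: Imul.
have Iu : I u by rewrite /u -Hu2 Hc; apply: Imul.
by apply: (noinv u Iu); exists v.
Qed.
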